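(* Let $\mathbf{u}$ be an $m$-dimensional unit vector with entries in $\mathcal{R}_{12}$ with $\mathrm{lde}(\mathbf{u})\geq 1$. Then there exists a sequence $G_1,\ldots,G_q$ of one-level operators of type $\zeta_{12}$ and two-level operators of type $X$ and $H'$ such that $\mathrm{lde}(G_1\cdots G_q\mathbf{u})<\mathrm{lde}(\mathbf{u})$.
   Context: $\zeta_{12}=e^{2\pi i/12}$, $\mathcal{R}_{12}$ is the smallest subring of $\mathbb{C}$ containing $1/2$ and $\zeta_{12}$, and $\mathbb{Z}[\zeta_{12}]$ the smallest subring containing $\zeta_{12}$. Let $\delta=1+i$. For a vector $\mathbf{u}$ over $\mathcal{R}_{12}$, $\mathrm{lde}(\mathbf{u})$ is the smallest $\ell\in\mathbb{N}$ such that $\delta^\ell\mathbf{u}$ has all entries in $\mathbb{Z}[\zeta_{12}]$. $X=\begin{bmatrix}0&1\\1&0\end{bmatrix}$, $H'=\frac{1+i}{2}\begin{bmatrix}1&1\\1&-1\end{bmatrix}$. The one-level operator $c_{[j]}$ of type $c$ is the $m\times m$ identity with $(j,j)$ entry replaced by $c$; the two-level operator $M_{[j,j']}$ ($j<j'$) of type $M\in\mathrm{M}_2(\mathbb{C})$ is the $m\times m$ identity with entries at $(j,j),(j,j'),(j',j),(j',j')$ replaced by $M_{1,1},M_{1,2},M_{2,1},M_{2,2}$. *)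

(* Defs.v *)
From HB Require Import structures.
From mathcomp Require Import all_boot all_order all_algebra all_field.
Set Implicit Arguments. Unset Strict Implicit. Unset Printing Implicit Defensive.
Import Order.TTheory GRing.Theory Num.Theory.
Local Open Scope ring_scope.

(* Complex numbers: algebraic complex numbers algC (all relevant numbers are algebraic). *)

(* zeta12 = e^{2 pi i/12} = cos(pi/6) + i sin(pi/6) = (sqrt 3 + i)/2 *)
Definition zeta12 : algC := (sqrtC 3%:R + 'i) / 2%:R.

Definition delta : algC := 1 + 'i.

(* Z[zeta12]: smallest subring of C containing zeta12 = integer polynomials in zeta12 *)
Definition inZzeta (x : algC) : Prop :=
  exists p : {poly int}, x = (map_poly (intr : int -> algC) p).[zeta12].

(* R12: smallest subring of C containing 1/2 and zeta12
   = { p(zeta12) / 2^k : p integer polynomial, k in N } *)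
Definition inR12 (x : algC) : Prop :=
  exists (p : {poly int}) (k : nat),
    x = (map_poly (intr : int -> algC) p).[zeta12] / 2%:R ^+ k.

Definition lde_ok m (u : 'cV[algC]_m) (l : nat) : Prop :=
  forall i, inZzeta (delta ^+ l * u i 0).

Definition is_lde m (u : 'cV[algC]_m) (l : nat) : Prop :=
  lde_ok u l /\ forall l', lde_ok u l' -> (l <= l')%N.

Definition unit_vec m (u : 'cV[algC]_m) : Prop :=
  \sum_(i < m) `|u i 0| ^+ 2 = 1.

Definition one_level m (c : algC) (j : 'I_m) : 'M[algC]_m :=
  \matrix_(a, b) (if a == b then (if a == j then c else 1) else 0).

Definition two_level m (M : 'M[algC]_2) (j j' : 'I_m) : 'M[algC]_m :=
  \matrix_(a, b)
    if (a == j) && (b == j) then M ord0 ord0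
    else if (a == j) && (b == j') then M ord0 ord_max
    else if (a == j') && (b == j) then M ord_max ord0
    else if (a == j') && (b == j') then M ord_max ord_max
    else (if a == b then 1 else 0).

Definition Xmat : 'M[algC]_2 :=
  \matrix_(a, b) (if a == b then 0 else 1).

Definition Hpmat : 'M[algC]_2 :=
  \matrix_(a, b) (if (a == ord_max) && (b == ord_max) then - ((1 + 'i) / 2%:R)
                  else (1 + 'i) / 2%:R).

Definition is_gate m (G : 'M[algC]_m) : Prop :=
  (exists j : 'I_m, G = one_level zeta12 j) \/
  (exists (j j' : 'I_m), (j < j')%N /\ (G = two_level Xmat j j' \/ G = two_level Hpmat j j')).

Definition prod_mx m (Gs : seq 'M[algC]_m) : 'M[algC]_m :=
  foldr (fun G acc => G *m acc) 1%:M Gs.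

Definition all_gates m (Gs : seq 'M[algC]_m) : Prop :=
  forall G, G \in Gs -> is_gate G.

(* Main.v *)
Require Import Defs.
From HB Require Import structures.
From mathcomp Require Import all_boot all_order all_algebra all_field.
From mathcomp Require Import ring.
Import Order.TTheory GRing.Theory Num.Theory.
Local Open Scope ring_scope.

Notation z := zeta12.
Notation s3 := (sqrtC 3%:R : algC).

Lemma s2 : s3 ^+ 2 = 3%:R.
Proof. by rewrite sqrtCK. Qed.
Lemma i2 : 'i ^+ 2 = -1 :> algC.
Proof. exact: sqrCi. Qed.

Lemma z4 : z ^+ 4 = z ^+ 2 - 1.
Proof.
rewrite /zeta12. have := s2; have := i2. move: s3 ('i : algC) => s i Hi Hs.
by field: Hi Hs.
Qed.
Lemma z3 : z ^+ 3 = 'i.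
Proof.
rewrite /zeta12. have := s2; have := i2. move: s3 ('i : algC) => s i Hi Hs.
by field: Hi Hs.
Qed.

Definition val4 (a b c d : int) : algC :=
  a%:~R + b%:~R * z + c%:~R * z ^+ 2 + d%:~R * z ^+ 3.

Definition inR (x : algC) := exists a b c d, x = val4 a b c d.

Lemma val4D a b c d a' b' c' d' :
  val4 a b c d + val4 a' b' c' d' = val4 (a + a') (b + b') (c + c') (d + d').
Proof. rewrite /val4 !rmorphD /=; ring. Qed.

Lemma val4N a b c d : - val4 a b c d = val4 (- a) (- b) (- c) (- d).
Proof. rewrite /val4 !rmorphN /=; ring. Qed.

Lemma val4Z k a b c d : k%:~R * val4 a b c d = val4 (k * a) (k * b) (k * c) (k * d).
Proof. rewrite /val4 !rmorphM /=; ring. Qed.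

Lemma val4z a b c d : z * val4 a b c d = val4 (- d) a (b + d) c.
Proof.
rewrite /val4 rmorphN rmorphD /=.
have H := z4. ring: H.
Qed.

Lemma inRD x y : inR x -> inR y -> inR (x + y).
Proof. by move=> [a [b [c [d ->]]]] [a' [b' [c' [d' ->]]]]; rewrite val4D; do 4 eexists. Qed.
Lemma inRN x : inR x -> inR (- x).
Proof. by move=> [a [b [c [d ->]]]]; rewrite val4N; do 4 eexists. Qed.
Lemma inRB x y : inR x -> inR y -> inR (x - y).
Proof. by move=> hx hy; apply: inRD => //; apply: inRN. Qed.
Lemma inRZ k x : inR x -> inR (k%:~R * x).
Proof. by move=> [a [b [c [d ->]]]]; rewrite val4Z; do 4 eexists. Qed.
Lemma inRz x : inR x -> inR (z * x).
Proof. by move=> [a [b [c [d ->]]]]; rewrite val4z; do 4 eexists. Qed.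
Lemma inRzX k x : inR x -> inR (z ^+ k * x).
Proof. elim: k => [|k IH] hx; first by rewrite mul1r. by rewrite exprS -mulrA; apply/inRz/IH. Qed.
Lemma inRM x y : inR x -> inR y -> inR (x * y).
Proof.
move=> hx [a [b [c [d ->]]]].
have -> : x * val4 a b c d = a%:~R * (z ^+ 0 * x) + b%:~R * (z ^+ 1 * x)
   + c%:~R * (z ^+ 2 * x) + d%:~R * (z ^+ 3 * x) by rewrite /val4; ring.
by apply: inRD; [apply: inRD; [apply: inRD|]|]; apply/inRZ/inRzX.
Qed.
Lemma inR_int k : inR k%:~R.
Proof. exists k, 0, 0, 0; rewrite /val4; ring. Qed.
Lemma inR1 : inR 1. Proof. by have := inR_int 1; rewrite (rmorph1 (intr : int -> algC)). Qed.
Lemma inRzeta : inR z.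
Proof. by have := @inRz 1 inR1; rewrite mulr1. Qed.

Lemma inZzeta_inR x : inZzeta x -> inR x.
Proof.
move=> [p ->]; elim/poly_ind: p => [|p c IH].
  by rewrite rmorph0 horner0; have := inR_int 0; rewrite (rmorph0 (intr : int -> algC)).
rewrite rmorphD rmorphM /= map_polyX map_polyC /= hornerD hornerMX hornerC.
by apply: inRD; [apply: inRM => //; apply: inRzeta | apply: inR_int].
Qed.

Lemma inR_inZzeta x : inR x -> inZzeta x.
Proof.
move=> [a [b [c [d ->]]]].
exists (a%:P + b%:P * 'X + c%:P * 'X^2 + d%:P * 'X^3).
rewrite !rmorphD !rmorphM /= !map_polyC ?rmorphXn /= ?map_polyX ?map_polyXn /=.
by rewrite !hornerD !hornerCM hornerC !hornerM !hornerX /val4 !exprS expr0 !mulr1.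
Qed.
Lemma F2c (e : 'Z_2) : e = 0 \/ e = 1.
Proof. by case: e => [[|[|]]] //= H; [left|right]; apply/val_inj. Qed.

Definition pr (x : int) : 'Z_2 := x%:~R.

Lemma pr_even x : pr x = 0 -> (2 %| x)%Z.
Proof.
move=> h; apply/dvdz_mod0P.
have e := divz_eq x 2.
have r0 := modz_ge0 x (isT : (2 : int) != 0).
have r1 := ltz_pmod x (isT : (0 : int) < 2).
move: e r0 r1 h; case: (x %% 2)%Z => [[|[|n]]|n] //= -> _ _.
rewrite /pr rmorphD rmorphM /=.
have -> : ((2 : int)%:~R : 'Z_2) = 0 by apply/eqP.
by rewrite mulr0 add0r.
Qed.

Lemma pr_nat n : (pr n%:Z = 0) -> ~~ odd n.
Proof.
rewrite /pr => h.
have : (n%:R : 'Z_2) = 0 by rewrite -h.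
move/(congr1 (@nat_of_ord _)); rewrite (val_Zp_nat (p:=2)) //= => h2.
by rewrite (divn_eq n 2) h2 addn0 oddM andbF.
Qed.

Lemma BF1 (a b c d : 'Z_2) : b = c -> d = a + b ->
  a*a + b*b + c*c + d*d + a*c + b*d = 0 /\ a*b + b*c + c*d = 0.
Proof.
move=> -> ->.
by case: (F2c a) => ->; case: (F2c c) => ->; split; apply/eqP.
Qed.

Lemma BF2 (a b c d : 'Z_2) : ~ (b = c /\ d = a + b) ->
  a*a + b*b + c*c + d*d + a*c + b*d + (a*b + b*c + c*d) = 1.
Proof.
by case: (F2c a) => ->; case: (F2c b) => ->; case: (F2c c) => ->; case: (F2c d) => -> H;
  apply/eqP => //; exfalso; apply: H; split; apply/eqP.
Qed.
Definition zm {R : pzRingType} (r : R * R * R * R) : R * R * R * R :=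
  (- r.2, r.1.1.1, r.1.1.2 + r.2, r.1.2).

Definition alp {R : pzRingType} (r : R * R * R * R) : R :=
  let: (a, b, c, d) := r in a*a + b*b + c*c + d*d + a*c + b*d.

Definition patb (r : 'Z_2 * 'Z_2 * 'Z_2 * 'Z_2) : bool :=
  let: (a, b, c, d) := r in (b == c) && (d == a + b).

Definition sum0 (r r' : 'Z_2 * 'Z_2 * 'Z_2 * 'Z_2) : bool :=
  [&& r.1.1.1 + r'.1.1.1 == 0, r.1.1.2 + r'.1.1.2 == 0, r.1.2 + r'.1.2 == 0 & r.2 + r'.2 == 0].

Lemma BF3 (a b c d a' b' c' d' : 'Z_2) :
  ~~ patb (a, b, c, d) -> ~~ patb (a', b', c', d') ->
  alp (a, b, c, d) == alp (a', b', c', d') ->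
  exists k, sum0 (a, b, c, d) (iter k zm (a', b', c', d')).
Proof.
case: (F2c a) => ->; case: (F2c b) => ->; case: (F2c c) => ->; case: (F2c d) => ->;
case: (F2c a') => ->; case: (F2c b') => ->; case: (F2c c') => ->; case: (F2c d') => -> //=;
move=> _ _ _;
solve [exists 0%N; by [] | exists 1%N; by [] | exists 2%N; by [] | exists 3%N; by []
      | exists 4%N; by [] | exists 5%N; by []].
Qed.

Lemma zconj : z^* = (s3 - 'i) / 2%:R.
Proof.
rewrite /zeta12 rmorphM rmorphD /= conjCi fmorphV /= conjC_nat.
by rewrite (geC0_conj (x := s3)) // sqrtC_ge0 ler0n.
Qed.

Lemma normv a b c d : `|val4 a b c d| ^+ 2 =
  (a*a + b*b + c*c + d*d + a*c + b*d)%:~R + (a*b + b*c + c*d)%:~R * s3.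
Proof.
rewrite normCK /val4 !(rmorphD, rmorphM) /= !rmorph_int !conjCi !fmorphV /= !conjC_nat.
rewrite !(geC0_conj (x := s3)) ?sqrtC_ge0 ?ler0n //.
rewrite /zeta12.
have := s2; have := i2. move: s3 ('i : algC) => s i Hi Hs.
by field: Hi Hs.
Qed.

Lemma irr (p q : int) : p%:~R + q%:~R * s3 = 0 -> q = 0.
Proof.
move=> h; apply/eqP; apply: contraT => q0.
have qC : (q%:~R : algC) != 0 by rewrite intr_eq0.
have hs : s3 = - p%:~R / q%:~R.
  by apply: (mulIf qC); rewrite mulrVK ?unitfE // -[RHS]add0r -h; ring.
have e : p * p = 3 * (q * q).
  apply: (intr_inj (R := algC)).
  have := s2; rewrite hs => hh.
  rewrite !rmorphM /=.
  have -> : ((3 : int)%:~R : algC) = 3%:R by [].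
  rewrite -hh; field; done.
have ea := congr1 absz e; rewrite !abszM /= in ea.
have Q0 : (0 < `|q|)%N by rewrite absz_gt0.
have P0 : (0 < `|p|)%N.
  have : (0 < 3 * (`|q| * `|q|))%N by rewrite !muln_gt0 Q0.
  by rewrite -ea muln_gt0 andbb.
have := congr1 (logn 3) ea.
rewrite !lognM ?muln_gt0 ?Q0 ?P0 // => hh.
have l3 : logn 3 (1 + (1 + 1)) = 1%N by [].
rewrite l3 in hh.
by have := congr1 odd hh; rewrite /= !addnn !odd_double.
Qed.

Definition dD x := exists y, inR y /\ x = delta * y.
Definition d2 x := exists y, inR y /\ x = 2%:R * y.

Lemma pr_eq x y : pr x = pr y -> exists e, x = y + e * 2.
Proof.
move=> h.
have /dvdzP [e he] : (2 %| (x - y))%Z.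
  by apply: pr_even; rewrite /pr rmorphB /=; apply/eqP; rewrite subr_eq0; apply/eqP.
by exists e; rewrite -he; ring.
Qed.

Lemma pat_dD a b c d : pr b = pr c -> pr d = pr a + pr b -> dD (val4 a b c d).
Proof.
move=> /pr_eq [e hb] hd0.
have /pr_eq [f hd] : pr d = pr (a + b) by rewrite hd0 /pr rmorphD.
exists (val4 (a + c + e*2 + f) (c + e) (-e) (e + f)); split; first by do 4 eexists.
rewrite hd hb /delta -z3 /val4 !rmorphD !rmorphM !rmorphN /=.
have H := z4. ring: H.
Qed.

Definition valc (r : int * int * int * int) := val4 r.1.1.1 r.1.1.2 r.1.2 r.2.
Definition prc (r : int * int * int * int) : 'Z_2 * 'Z_2 * 'Z_2 * 'Z_2 :=
  (pr r.1.1.1, pr r.1.1.2, pr r.1.2, pr r.2).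

Lemma valc_iter k r : valc (iter k zm r) = z ^+ k * valc r.
Proof.
elim: k => [|k IH] /=; first by rewrite mul1r.
rewrite exprS -mulrA -IH; case: (iter k zm r) => [[[a b] c] d].
by rewrite /valc /= val4z.
Qed.

Lemma prc_iter k r : prc (iter k zm r) = iter k zm (prc r).
Proof.
elim: k => [|k IH] //=; rewrite -IH; case: (iter k zm r) => [[[a b] c] d].
by rewrite /prc /zm /= /pr rmorphN rmorphD.
Qed.

Lemma pr_sum0 x y : pr x + pr y == 0 -> exists q, x + y = q * 2.
Proof.
move=> h; have /dvdzP [q hq] : (2 %| (x + y))%Z by apply: pr_even; rewrite /pr rmorphD; apply/eqP.
by exists q.
Qed.

Lemma pair_lift k r r' : sum0 (prc r) (prc (iter k zm r')) ->
  d2 (valc r + z ^+ k * valc r').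
Proof.
rewrite -valc_iter; case: (iter k zm r') => [[[a' b'] c'] d'].
case: r => [[[a b] c] d].
rewrite /sum0 /prc /= => /and4P [/pr_sum0 [q1 h1] /pr_sum0 [q2 h2] /pr_sum0 [q3 h3] /pr_sum0 [q4 h4]].
exists (val4 q1 q2 q3 q4); split; first by do 4 eexists.
rewrite /valc /= val4D h1 h2 h3 h4 /val4 !rmorphM /=; ring.
Qed.

Lemma prod_mx_cons m (G : 'M[algC]_m) s : prod_mx (G :: s) = G *m prod_mx s.
Proof. by []. Qed.

Lemma prod_mx_cat m (s1 s2 : seq 'M[algC]_m) :
  prod_mx (s1 ++ s2) = prod_mx s1 *m prod_mx s2.
Proof.
elim: s1 => [|G s IH]; first by rewrite /= /prod_mx /= mul1mx.
by rewrite cat_cons !prod_mx_cons IH mulmxA.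
Qed.

Lemma one_levelE m c (j : 'I_m) (v : 'cV[algC]_m) i :
  (one_level c j *m v) i 0 = (if i == j then c else 1) * v i 0.
Proof.
rewrite !mxE (bigD1 i) //= big1 ?addr0 => [|k /negbTE ki]; rewrite !mxE ?eqxx //.
by rewrite eq_sym ki mul0r.
Qed.

Lemma phaseE m k c (j : 'I_m) (v : 'cV[algC]_m) i :
  (prod_mx (nseq k (one_level c j)) *m v) i 0 = (if i == j then c ^+ k else 1) * v i 0.
Proof.
elim: k i => [|k IH] i.
  by rewrite /prod_mx /= mul1mx; case: ifP; rewrite ?expr0 mul1r.
rewrite (@prod_mx_cons _ (one_level c j) (nseq k (one_level c j))) -mulmxA one_levelE IH.
by case: ifP; rewrite ?mul1r // exprS mulrA.
Qed.

Lemma two_levelE m (M : 'M[algC]_2) (j j' : 'I_m) (v : 'cV[algC]_m) i : j != j' ->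
  (two_level M j j' *m v) i 0 =
  if i == j then M ord0 ord0 * v j 0 + M ord0 ord_max * v j' 0
  else if i == j' then M ord_max ord0 * v j 0 + M ord_max ord_max * v j' 0
  else v i 0.
Proof.
move=> njj'; have nj'j : (j' == j) = false by rewrite eq_sym (negbTE njj').
rewrite mxE.
case: (eqVneq i j) => [->|nij].
  rewrite (bigD1 j) //= (bigD1 j') /=; last by rewrite nj'j.
  rewrite big1 ?addr0 => [|k /andP [kj kj']]; rewrite !mxE ?eqxx ?nj'j //=.
  by rewrite ?(negbTE kj) ?(negbTE kj') ?(negbTE njj') ?nj'j ?andbF /= ?(eq_sym j k) ?(eq_sym j' k) ?(negbTE kj) ?(negbTE kj') mul0r.
case: (eqVneq i j') => [->|nij'].
  rewrite (bigD1 j) //= (bigD1 j') /=; last by rewrite nj'j.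
  rewrite big1 ?addr0 => [|k /andP [kj kj']]; rewrite !mxE ?eqxx ?nj'j //=.
  by rewrite ?(negbTE kj) ?(negbTE kj') ?(negbTE njj') ?nj'j ?andbF /= ?(eq_sym j k) ?(eq_sym j' k) ?(negbTE kj) ?(negbTE kj') mul0r.
rewrite (bigD1 i) //= big1 ?addr0 => [|k ki]; rewrite !mxE ?eqxx (negbTE nij) (negbTE nij') //=.
  by rewrite mul1r.
by rewrite eq_sym (negbTE ki) mul0r.
Qed.

Lemma inRdelta : inR delta.
Proof. by rewrite /delta -z3; apply: inRD; [exact: inR1 | rewrite -[z ^+ 3]mulr1; apply/inRzX/inR1]. Qed.

Lemma H_step m (v : 'cV[algC]_m) (a b : 'I_m) (w : algC) :
  a != b -> inR w -> (forall i, inR (v i 0)) -> v a 0 + v b 0 = 2%:R * w ->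
  forall i, [/\ inR ((two_level Hpmat a b *m v) i 0),
     (i == a) || (i == b) -> dD ((two_level Hpmat a b *m v) i 0) &
     i != a -> i != b -> (two_level Hpmat a b *m v) i 0 = v i 0].
Proof.
move=> nab wR hR hs i.
have ea : v a 0 = 2%:R * w - v b 0 by rewrite -hs addrK.
have e1 : (1 + 'i) / 2%:R * v a 0 + (1 + 'i) / 2%:R * v b 0 = delta * w.
  by rewrite ea /delta; field.
have e2 : (1 + 'i) / 2%:R * v a 0 + - ((1 + 'i) / 2%:R) * v b 0 = delta * (w - v b 0).
  by rewrite ea /delta; field.
rewrite two_levelE // !mxE /=.
case: (eqVneq i a) => [_|nia].
  rewrite e1; split => //; [exact: inRM inRdelta wR | by move=> _; exists w].
case: (eqVneq i b) => [_|nib].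
  rewrite e2; have wb : inR (w - v b 0) by apply: inRB.

  split => //; [exact: inRM inRdelta wb | by move=> _; exists (w - v b 0)].
by split => //; rewrite (negbTE nia) (negbTE nib).
Qed.

Lemma odd_D2 m (X : {set 'I_m}) (a b : 'I_m) : a != b -> (a \in X) = (b \in X) ->
  odd #|X :\ a :\ b| = odd #|X|.
Proof.
move=> nab hab.
rewrite [in RHS](cardsD1 a) [in RHS](cardsD1 b (X :\ a)).
have -> : (b \in X :\ a) = (a \in X) by rewrite !inE eq_sym nab hab.
by case: (a \in X) => //=; rewrite negbK.
Qed.

Lemma is_gate_one m (j : 'I_m) : is_gate (one_level zeta12 j).
Proof. by left; exists j. Qed.

Lemma main_ind m (n : nat) (v : 'cV[algC]_m) (B : {set 'I_m}) (cl : 'I_m -> bool) :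
  #|B| = n ->
  (forall i, inR (v i 0)) ->
  (forall i, i \notin B -> dD (v i 0)) ->
  (forall i j, i \in B -> j \in B -> i != j -> cl i = cl j ->
     exists k, d2 (v i 0 + z ^+ k * v j 0)) ->
  ~~ odd #|[set i in B | cl i]| -> ~~ odd #|[set i in B | ~~ cl i]| ->
  exists Gs, all_gates Gs /\ forall i, dD ((prod_mx Gs *m v) i 0).
Proof.
elim/ltn_ind: n v B => n IH v B hB hR hout hpair hp1 hp2.
case: (set_0Vmem B) => [B0 | [j jB]].
  exists [::]; split; first by move=> G.
  move=> i; rewrite /prod_mx /= mul1mx; apply: hout; by rewrite B0 in_set0.
pose A := [set i in B | cl i == cl j].
have hA : ~~ odd #|A|.
  case clj: (cl j).
    suff -> : A = [set i in B | cl i] by [].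
    by apply/setP => i; rewrite !inE clj eqb_id.
  suff -> : A = [set i in B | ~~ cl i] by [].
  by apply/setP => i; rewrite !inE clj eqbF_neg.
have jA : j \in A by rewrite inE jB eqxx.
have : (0 < #|A :\ j|)%N.
  move: hA; rewrite (cardsD1 j A) jA; case: #|A :\ j| => //.
case/card_gt0P => j'; rewrite !inE => /and3P [nj'j j'B /eqP clj'].
have njj' : j != j' by rewrite eq_sym.
have [k [w [wR hw]]] := hpair j j' jB j'B njj' (esym clj').
pose P := prod_mx (nseq k (one_level zeta12 j')).
pose v1 := P *m v.
have v1E : forall i, v1 i 0 = (if i == j' then z ^+ k else 1) * v i 0 by move=> i; apply: phaseE.
have v1R : forall i, inR (v1 i 0).
  by move=> i; rewrite v1E; case: ifP => _; [apply: inRzX | rewrite mul1r].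
have v1j : v1 j 0 = v j 0 by rewrite v1E (negbTE njj') mul1r.
have v1j' : v1 j' 0 = z ^+ k * v j' 0 by rewrite v1E eqxx.
have v1o : forall i, i != j -> i != j' -> v1 i 0 = v i 0.
  by move=> i _ /negbTE h; rewrite v1E h mul1r.
have [a [b [ab hab]]] : exists a b : 'I_m, (a < b)%N /\
    ((a == j) && (b == j') || (a == j') && (b == j)).
  case: (ltngtP j j') => h.
  - by exists j, j'; rewrite h !eqxx.
  - by exists j', j; rewrite h !eqxx orbT.
  - by move: njj'; rewrite -val_eqE /= h eqxx.
have nab : a != b by rewrite -val_eqE /= neq_ltn ab.
have hs : v1 a 0 + v1 b 0 = 2%:R * w.
  case/orP: hab => /andP [/eqP -> /eqP ->]; rewrite v1j v1j' // addrC //.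
pose Hm := two_level Hpmat a b.
pose v2 := Hm *m v1.
have hstep := @H_step m v1 a b w nab wR v1R hs.
have abjj : forall i, ((i == a) || (i == b)) = ((i == j) || (i == j')).
  move=> i; case/orP: hab => /andP [/eqP -> /eqP ->] //; by rewrite orbC.
have v2o : forall i, i != j -> i != j' -> v2 i 0 = v i 0.
  move=> i nij nij'.
  have : ~~ ((i == a) || (i == b)) by rewrite abjj negb_or nij nij'.
  rewrite negb_or => /andP [nia nib].
  by case: (hstep i) => _ _ /(_ nia nib) ->; rewrite v1o.
pose B' := B :\ j :\ j'.
have eB : forall c : bool, [set x in B' | cl x == c] = [set x in B | cl x == c] :\ j :\ j'.
  move=> c; apply/setP => x; rewrite !inE.
  by case: (x == j'); case: (x == j); case: (x \in B).
have hpar : forall c : bool, odd #|[set x in B' | cl x == c]| = odd #|[set x in B | cl x == c]|.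
  move=> c; rewrite eB odd_D2 //; by rewrite !inE jB j'B clj'.
have e1 : forall B0 : {set 'I_m}, [set x in B0 | cl x] = [set x in B0 | cl x == true].
  by move=> B0; apply/setP => x; rewrite !inE eqb_id.
have e2 : forall B0 : {set 'I_m}, [set x in B0 | ~~ cl x] = [set x in B0 | cl x == false].
  by move=> B0; apply/setP => x; rewrite !inE eqbF_neg.
have hB' : (#|B'| < n)%N.
  rewrite -hB /B' (cardsD1 j B) jB add1n ltnS.
  apply: subset_leq_card; apply/subsetP => i; rewrite !inE; by case/andP.
have [Gs [hG hGv]] : exists Gs, all_gates Gs /\ forall i, dD ((prod_mx Gs *m v2) i 0).
  apply: (IH _ hB' v2 B' erefl).
- by move=> i; case: (hstep i).
- move=> i; rewrite !inE => hi.
  case: (boolP ((i == j) || (i == j'))) => [hij|].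
    by case: (hstep i) => _ h _; apply: h; rewrite abjj.
  rewrite negb_or => /andP [nij nij'].
  have iB : i \notin B by move: hi; rewrite nij nij'.
  have : ~~ ((i == a) || (i == b)) by rewrite abjj negb_or nij nij'.
  rewrite negb_or => /andP [nia nib].
  case: (hstep i) => _ _ /(_ nia nib) ->.
  by rewrite v1o //; apply: hout.
- move=> i i2; rewrite !inE => /and3P [nij' nij iB] /and3P [ni2j' ni2j i2B] nii2 hc.
  by rewrite !v2o //; apply: hpair.
- by rewrite e1 hpar -e1.
- by rewrite e2 hpar -e2.
exists (Gs ++ Hm :: nseq k (one_level zeta12 j')); split.
  move=> G; rewrite mem_cat in_cons => /or3P [/hG //|/eqP ->|].
    by right; exists a, b; split => //; right.
  by move/nseqP => [-> _]; apply: is_gate_one.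
by move=> i; rewrite prod_mx_cat prod_mx_cons -!mulmxA.
Qed.

Definition bet {R : pzRingType} (r : R * R * R * R) : R :=
  let: (a, b, c, d) := r in a*b + b*c + c*d.

Lemma BF1b (r : 'Z_2 * 'Z_2 * 'Z_2 * 'Z_2) : patb r ==> (alp r == 0) && (bet r == 0).
Proof.
case: r => [[[a b] c] d].
by case: (F2c a) => ->; case: (F2c b) => ->; case: (F2c c) => ->; case: (F2c d) => ->.
Qed.
Lemma BF1t (r : 'Z_2 * 'Z_2 * 'Z_2 * 'Z_2) : patb r -> alp r = 0 /\ bet r = 0.
Proof. by move=> h; have := BF1b r; rewrite h /= => /andP [/eqP -> /eqP ->]. Qed.

Lemma BF2b (r : 'Z_2 * 'Z_2 * 'Z_2 * 'Z_2) : ~~ patb r ==> (alp r + bet r == 1).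
Proof.
case: r => [[[a b] c] d].
by case: (F2c a) => ->; case: (F2c b) => ->; case: (F2c c) => ->; case: (F2c d) => ->.
Qed.
Lemma BF2t (r : 'Z_2 * 'Z_2 * 'Z_2 * 'Z_2) : ~~ patb r -> alp r + bet r = 1.
Proof. by move=> h; have := BF2b r; rewrite h /= => /eqP. Qed.

Lemma normc r : `|valc r| ^+ 2 = (alp r)%:~R + (bet r)%:~R * s3.
Proof. by case: r => [[[a b] c] d]; rewrite /valc normv. Qed.

Lemma pr_alp r : pr (alp r) = alp (prc r).
Proof. by case: r => [[[a b] c] d]; rewrite /pr /alp /prc /= !rmorphD !rmorphM. Qed.
Lemma pr_bet r : pr (bet r) = bet (prc r).
Proof. by case: r => [[[a b] c] d]; rewrite /pr /bet /prc /= !rmorphD !rmorphM. Qed.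

Lemma delta_neq0 : delta != 0.
Proof.
apply/eqP => h.
have hi : 'i = -1 :> algC by apply/eqP; rewrite -subr_eq0 opprK addrC; apply/eqP.
have := i2; rewrite hi sqrrN expr1n => /eqP; rewrite -subr_eq0 opprK.
by rewrite (_ : 1 + 1 = 2%:R) // pnatr_eq0.
Qed.

Lemma normdelta : `|delta| ^+ 2 = 2%:R.
Proof.
rewrite normCK /delta rmorphD /= conjCi rmorph1.
have := i2; move: ('i : algC) => i Hi. ring: Hi.
Qed.

From Stdlib Require Import Classical.

Lemma ex_lde m (w : 'cV[algC]_m) n : lde_ok w n -> exists l', is_lde w l' /\ (l' <= n)%N.
Proof.
elim/ltn_ind: n => n IH h.
case: (classic (exists l', (l' < n)%N /\ lde_ok w l')) => [[l' [lt hl]] | nex].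
  have [l'' [h1 h2]] := IH l' lt hl.
  by exists l''; split => //; apply: leq_trans h2 (ltnW lt).
exists n; split => //; split => // l' hl'.
by rewrite leqNgt; apply/negP => lt; apply: nex; exists l'.
Qed.

Theorem lemma7p4 (m : nat) (u : 'cV[algC]_m) (l : nat) :
  (forall i, inR12 (u i 0)) ->
  unit_vec u ->
  is_lde u l ->
  (1 <= l)%N ->
  exists (Gs : seq 'M[algC]_m) (l' : nat),
    all_gates Gs /\ is_lde (prod_mx Gs *m u) l' /\ (l' < l)%N.
Proof.
move=> _ hunit [hok _] l1.
have exc : forall i, exists r : int * int * int * int, valc r == delta ^+ l * u i 0.
  move=> i; have [a [b [c [d e]]]] := @inZzeta_inR _ (hok i).
  by exists (a, b, c, d); rewrite /valc /= e.
pose c i := xchoose (exc i).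
have hc : forall i, valc (c i) = delta ^+ l * u i 0 := fun i => eqP (xchooseP (exc i)).
pose B := [set i | ~~ patb (prc (c i))].
pose cl i := alp (prc (c i)) == 1.
have vE : forall i, (delta ^+ l *: u) i 0 = valc (c i) by move=> i; rewrite mxE hc.
have e2 : ((2 : int)%:~R : algC) = 2%:R by [].
have hsum : \sum_i ((alp (c i))%:~R + (bet (c i))%:~R * s3) = 2%:R ^+ l :> algC.
  have : \sum_i `|valc (c i)| ^+ 2 = 2%:R ^+ l.
    rewrite (eq_bigr (fun i => 2%:R ^+ l * `|u i 0| ^+ 2)) => [|i _].
      by rewrite -mulr_sumr hunit mulr1.
    by rewrite hc normrM normrX exprMn -exprM mulnC exprM normdelta.
  by move=> <-; apply: eq_bigr => i _; rewrite normc.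
rewrite big_split /= -mulr_suml -!rmorph_sum /= in hsum.
have hb0 : \sum_i bet (c i) = 0.
  apply: (@irr (\sum_i alp (c i) - 2 ^+ l)).
  rewrite rmorphB rmorphXn /= e2 -hsum; ring.
rewrite hb0 mul0r addr0 in hsum.
have ha : \sum_i alp (c i) = 2 ^+ l.
  by apply: (intr_inj (R := algC)); rewrite rmorphXn /= e2 hsum.
have pa : \sum_i alp (prc (c i)) = 0.
  rewrite -(eq_bigr _ (fun i _ => pr_alp (c i))) /pr -rmorph_sum /= ha rmorphXn /=.
  have -> : ((2 : int)%:~R : 'Z_2) = 0 by apply/eqP.
  by rewrite expr0n; move: l1; case: (l) => //.
have pb : \sum_i bet (prc (c i)) = 0.
  transitivity (pr (\sum_i bet (c i))); last by rewrite hb0 /pr rmorph0.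
  by rewrite /pr rmorph_sum; apply: eq_bigr => i _; rewrite -pr_bet.
have cA : \sum_i alp (prc (c i)) = (#|[set i in B | cl i]|)%:R.
  rewrite -sum1_card natr_sum [RHS]big_mkcond; apply: eq_bigr => i _.
  rewrite !inE /cl; set A := alp (prc (c i)); set Bt := bet (prc (c i)).
  have h1 : patb (prc (c i)) -> A = 0 /\ Bt = 0 := @BF1t _.
  clearbody A Bt.
  case: (patb (prc (c i))) h1 => h1 /=.
    by have [-> _] := h1 isT.
  by case: (F2c A) => ->.
have cB : \sum_i bet (prc (c i)) = (#|[set i in B | ~~ cl i]|)%:R.
  rewrite -sum1_card natr_sum [RHS]big_mkcond; apply: eq_bigr => i _.
  rewrite !inE /cl; set A := alp (prc (c i)); set Bt := bet (prc (c i)).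
  have h1 : patb (prc (c i)) -> A = 0 /\ Bt = 0 := @BF1t _.
  have h2 : ~~ patb (prc (c i)) -> A + Bt = 1 := @BF2t _.
  clearbody A Bt.
  case: (patb (prc (c i))) h1 h2 => h1 h2 /=.
    by have [_ ->] := h1 isT.
  move: (h2 isT) => /eqP.
  by case: (F2c A) => ->; case: (F2c Bt) => ->.
have p1 : ~~ odd #|[set i in B | cl i]| by apply: pr_nat; exact: (etrans (esym cA) pa).
have p2 : ~~ odd #|[set i in B | ~~ cl i]| by apply: pr_nat; exact: (etrans (esym cB) pb).
have [Gs [hG hGv]] : exists Gs, all_gates Gs /\ forall i, dD ((prod_mx Gs *m (delta ^+ l *: u)) i 0).
  apply: (@main_ind m _ (delta ^+ l *: u) B cl erefl) => //.
  - move=> i; rewrite vE; case: (c i) => [[[a b] c'] d]; by do 4 eexists.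
  - move=> i; rewrite inE negbK vE; case: (c i) => [[[a b] c'] d].
    rewrite /prc /patb /= => /andP [/eqP h1 /eqP h2]; exact: pat_dD.
  - move=> i j; rewrite !inE /cl !vE => hi hj _.
    case: (c i) hi => [[[a b] c1] d] hi; case: (c j) hj => [[[a' b'] c1'] d'] hj hcl.
    have hal : alp (prc (a, b, c1, d)) == alp (prc (a', b', c1', d')).
      move: hcl; set A := alp _; set A' := alp _; clearbody A A'.
      by case: (F2c A) => ->; case: (F2c A') => ->.
    have [k hk] := BF3 (pr a) (pr b) (pr c1) (pr d) (pr a') (pr b') (pr c1') (pr d') hi hj hal.
    exists k; apply: pair_lift; rewrite prc_iter; exact: hk.
have hw : lde_ok (prod_mx Gs *m u) l.-1.
  move=> i; have [y [yR hy]] := hGv i.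
  rewrite -scalemxAr mxE in hy.
  apply: inR_inZzeta.
  suff -> : delta ^+ l.-1 * (prod_mx Gs *m u) i 0 = y by [].
  apply: (mulfI delta_neq0); rewrite mulrA -exprS prednK //.
have [l' [hl' le]] := @ex_lde _ _ _ hw.
exists Gs, l'; split => //; split => //.
by apply: leq_ltn_trans le _; rewrite ltn_predL.
Qed.
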